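(* Let $M=A+\Delta-\sigma vv^{\mathsf T}$ be a generalized modularity matrix and let $S_1,\dots,S_k$ ($k\ge1$) be pairwise disjoint subsets of $V$ such that, for every $i=1,\dots,k$, $$e_{\mathrm{in}}(S_i)+\mathbb{1}_{S_i}^{\mathsf T}\Delta\mathbb{1}_{S_i}\ >\ \sum_{j\ne i}\mathbb{1}_{S_i}^{\mathsf T}A\mathbb{1}_{S_j}.$$ Then $M$ has at least $k-1$ positive eigenvalues (counted with multiplicity).
   Context: Let $V=\{1,\dots,n\}$ and let $A=(a_{ij})\in\mathbb{R}^{n\times n}$ be the adjacency matrix of an undirected connected weighted graph on $V$, possibly with loops, i.e. $A$ is symmetric, entrywise nonnegative and irreducible. A generalized modularity matrix is any matrix $M=A+\Delta-\sigma vv^{\mathsf T}$ where $\Delta$ is a real diagonal matrix, $v\ne0$ is entrywise nonnegative, and $\sigma>0$. For $S\subseteq V$, $\mathbb{1}_S$ is its characteristic vector and $e_{\mathrm{in}}(S)=\mathbb{1}_S^{\mathsf T}A\mathbb{1}_S=\sum_{i,j\in S}a_{ij}$ is the total internal edge weight (including loops). *)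

(* Defs.v *)
(* Real numbers are modelled by an arbitrary real closed field
   R : rcfType (the characteristic polynomial of a real symmetric matrix splits
   over R, so eigenvalues live in R). *)
From HB Require Import structures.
From mathcomp Require Import all_boot all_order all_algebra.
Set Implicit Arguments. Unset Strict Implicit. Unset Printing Implicit Defensive.
Import Order.TTheory GRing.Theory Num.Theory.
Local Open Scope ring_scope.

Definition chi {R : nzRingType} {n : nat} (S : {set 'I_n}) : 'cV[R]_n :=
  \col_i (i \in S)%:R.

Definition bilf {R : nzRingType} {n : nat} (x : 'cV[R]_n) (B : 'M[R]_n) (y : 'cV[R]_n) : R :=
  (x^T *m B *m y) 0 0.

(* A is the adjacency matrix of an undirected connected weighted graph
   (loops allowed): symmetric, entrywise nonnegative, irreducible.
   Irreducibility of a symmetric nonnegative matrix = connectedness of its graph: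
   no nonempty proper vertex subset is disconnected from its complement. *)
Definition irreducible_mx (R : numDomainType) (n : nat) (A : 'M[R]_n) : Prop :=
  forall S : {set 'I_n}, S != set0 -> S != setT ->
    exists i j, [/\ i \in S, j \notin S & A i j != 0].

Definition adjacency_mx (R : numDomainType) (n : nat) (A : 'M[R]_n) : Prop :=
  [/\ A^T = A, (forall i j, 0 <= A i j) & irreducible_mx A].

(* M has at least m positive eigenvalues counted with multiplicity:
   there are m positive numbers (with repetition) whose product of linear
   factors divides the characteristic polynomial of M. *)
Definition at_least_pos_eigs (R : realFieldType) (n : nat) (M : 'M[R]_n) (m : nat) : Prop :=
  exists s : seq R, [/\ size s = m, all (fun x => 0 < x) s &
    (\prod_(x <- s) ('X - x%:P)) %| char_poly M].

(* Main.v *)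
Require Import Defs.
From HB Require Import structures.
From mathcomp Require Import all_boot all_order all_algebra.
From mathcomp Require Import ring.
From mathcomp Require Import ring complex sesquilinear spectral.
Import Order.TTheory GRing.Theory Num.Theory.
Local Open Scope ring_scope.
Lemma posdef (C : numClosedFieldType) k (B : 'M[C]_k) (c : 'rV[C]_k) :
  B^T = B -> (forall i j, i != j -> 0 <= B i j) ->
  (forall i, \sum_(j | j != i) B i j < B i i) -> c != 0 ->
  0 < (c *m B *m map_mx Num.conj c^T) 0 0.
Proof.
move=> Bsym Bge0 Bdom cN0.
have Bs : forall i j, B j i = B i j by move=> i j; rewrite -{1}Bsym mxE.
pose nn i := c 0 i * (c 0 i)^*.
pose t i j := c 0 i * (c 0 j)^*.
pose F i j := B i j * (nn i + t i j).
have E : (c *m B *m map_mx Num.conj c^T) 0 0 =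
   \sum_i (B i i - \sum_(j | j != i) B i j) * nn i + \sum_i \sum_(j | j != i) F i j.
  rewrite mxE; under eq_bigr => j _ do rewrite !mxE big_distrl /=.
  rewrite exchange_big -big_split /=; apply: eq_bigr => i _.
  rewrite (bigD1 i) //= /F.
  under [X in _ = _ + X]eq_bigr => j _ do rewrite mulrDr.
  rewrite big_split /= -big_distrl /=.
  rewrite [X in _ + X = _](eq_bigr (fun j => B i j * t i j)); last first.
    by move=> j _; rewrite /t; ring.
  rewrite /nn; ring.
have Sge0 : 0 <= \sum_i \sum_(j | j != i) F i j.
  set S := \sum_i _.
  have SS : S = \sum_i \sum_(j | j != i) F j i.
    rewrite /S; under eq_bigr => i _ do rewrite big_mkcond /=.
    rewrite exchange_big; apply: eq_bigr => i _; rewrite [RHS]big_mkcond.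
    by apply: eq_bigr => j _; rewrite eq_sym.
  rewrite -(pmulrn_lge0 _ (isT : (0 < 2)%N)) mulr2n {1}SS /S -big_split /=.
  apply: sumr_ge0 => i _; rewrite -big_split /=; apply: sumr_ge0 => j ji.
  have -> : F j i + F i j = B i j * ((c 0 i + c 0 j) * (c 0 i + c 0 j)^*).
    by rewrite /F /nn /t Bs rmorphD /=; ring.
  by apply: mulr_ge0; [apply: Bge0; rewrite eq_sym | exact: mul_conjC_ge0].
rewrite E; apply: ltr_wpDr => //.
have [i0 ci0] : exists i, c 0 i != 0.
  by have /matrix0Pn [i [j cij]] := cN0; exists j; rewrite (ord1 i) in cij.
rewrite (bigD1 i0) //=; apply: ltr_wpDr.
  apply: sumr_ge0 => i _; apply: mulr_ge0; last exact: mul_conjC_ge0.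
  by rewrite subr_ge0 ltW.
apply: mulr_gt0; first by rewrite subr_gt0.
by rewrite lt_def mul_conjC_ge0 andbT mulf_neq0 // conjC_eq0.
Qed.
Section RealPart.
Variables (R : realFieldType) (n k : nat) (S : 'I_k -> {set 'I_n}).

Definition Xmx : 'M[R]_(k, n) := \matrix_(i, j) (j \in S i)%:R.

Lemma XNX (N : 'M[R]_n) i j : (Xmx *m N *m Xmx^T) i j = bilf (chi (S i)) N (chi (S j)).
Proof.
rewrite /bilf !mxE; apply: eq_bigr => b _; rewrite !mxE; congr (_ * _).
by apply: eq_bigr => a _; rewrite !mxE.
Qed.

Lemma bilfD (x y : 'cV[R]_n) (N1 N2 : 'M[R]_n) :
  bilf x (N1 + N2) y = bilf x N1 y + bilf x N2 y.
Proof. by rewrite /bilf mulmxDr mulmxDl mxE. Qed.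

Lemma bilf_diag (d : 'rV[R]_n) i j : [disjoint S i & S j] ->
  bilf (chi (S i)) (diag_mx d) (chi (S j)) = 0.
Proof.
move=> dis; rewrite /bilf mxE; apply: big1 => b _.
rewrite mxE (bigD1 b) //= big1 ?addr0; last first.
  by move=> a ab; rewrite !mxE (negbTE ab) mulr0n mulr0.
rewrite !mxE eqxx mulr1n.
case: (boolP (b \in S i)) => bi; last by rewrite !mul0r.
case: (boolP (b \in S j)) => bj; last by rewrite mulr0.
by rewrite (disjointFr dis bi) in bj.
Qed.

Lemma bilf_ge0 (A : 'M[R]_n) i j : (forall a b, 0 <= A a b) ->
  0 <= bilf (chi (S i)) A (chi (S j)).
Proof.
move=> Age0; rewrite /bilf mxE; apply: sumr_ge0 => b _; rewrite !mxE.
apply: mulr_ge0; last exact: ler0n.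
by apply: sumr_ge0 => a _; rewrite !mxE; apply: mulr_ge0.
Qed.

End RealPart.

Lemma char_poly_similar (F : fieldType) n (P D : 'M[F]_n) : P \in unitmx ->
  char_poly (invmx P *m D *m P) = char_poly D.
Proof.
move=> Pu; rewrite /char_poly /char_poly_mx.
set Pi := map_mx polyC (invmx P); set Pp := map_mx polyC P.
have PiP : Pi *m Pp = 1%:M by rewrite -map_mxM mulVmx // map_mx1.
have -> : 'X%:M - map_mx polyC (invmx P *m D *m P) =
          Pi *m ('X%:M - map_mx polyC D) *m Pp.
  rewrite mulmxBr mulmxBl !map_mxM mul_mx_scalar.
  by rewrite -scalemxAl PiP scalemx1.
rewrite !det_mulmx mulrC mulrA -det_mulmx mulmxE.
have -> : Pp * Pi = 1 by rewrite -mulmxE -map_mxM mulmxV // map_mx1.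
by rewrite det1 mul1r.
Qed.

Lemma real_complex_real (R : rcfType) (a : R) : (real_complex R a) \is Num.real.
Proof. by rewrite complex_real. Qed.

Lemma conj_real_complex (R : rcfType) (a : R) : (real_complex R a)^* = real_complex R a.
Proof. exact/conj_Creal/real_complex_real. Qed.

Local Open Scope sesquilinear_scope.

Theorem mainTheorem12 (R : rcfType) (n k : nat)
  (A : 'M[R]_n) (d : 'rV[R]_n) (v : 'cV[R]_n) (sigma : R)
  (S : 'I_k -> {set 'I_n}) :
  adjacency_mx A ->
  v != 0 -> (forall i, 0 <= v i 0) -> 0 < sigma ->
  (0 < k)%N ->
  (forall i j, i != j -> [disjoint S i & S j]) ->
  (forall i, bilf (chi (S i)) A (chi (S i)) + bilf (chi (S i)) (diag_mx d) (chi (S i))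
             > \sum_(j < k | j != i) bilf (chi (S i)) A (chi (S j))) ->
  at_least_pos_eigs (A + diag_mx d - sigma *: (v *m v^T)) k.-1.
Proof.
move=> [Asym Age0 _] vN0 vge0 sig0 k0 dis dom.
set M := A + diag_mx d - sigma *: (v *m v^T).
pose f := real_complex R.
have Msym : M^T = M.
  by rewrite /M linearB /= linearD /= tr_diag_mx Asym linearZ /= trmx_mul trmxK.
pose MC := map_mx f M.
have MCh : MC \is hermsymmx.
  rewrite is_hermitianmxE expr0 scale1r; apply/eqP.
  rewrite /MC map_trmx Msym; apply/matrixP => i j.
  by rewrite !mxE conj_real_complex.
have /mxOverP Dreal := hermitian_spectral_diag_real MCh.
have /orthomx_spectralP MCE := hermitian_normalmx MCh.
have Pu := spectral_unitarymx MC.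
move: Dreal MCE Pu; set P := spectralmx MC; set D := spectral_diag MC.
move=> Dreal MCE Pu.
have charC : char_poly MC = \prod_i ('X - (D 0 i)%:P).
  rewrite {1}MCE char_poly_similar ?spectral_unit // char_poly_trig ?diag_mx_is_trig //.
  by apply: eq_bigr => i _; rewrite mxE eqxx mulr1n.
pose IS := [set i | 0 < D 0 i].
have key : (k.-1 <= #|IS|)%N.
  rewrite leqNgt; apply/negP => lt.
  pose X := @Xmx R n k S; pose XC := map_mx f X; pose vC := map_mx f v.
  pose G : 'M[R[i]]_(n, #|IS|) := \matrix_(j, t) (j == fintype.enum_val t)%:R.
  pose Pt := P^t*.
  pose L := row_mx (XC *m vC) (XC *m Pt *m G).
  have rL : (\rank L < k)%N.
    apply: leq_ltn_trans (rank_leq_col L) _.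
    rewrite add1n; move: lt k0; case: (k) => // k' /=.
  have : kermx L != 0.
    by rewrite kermx_eq0 /row_free; apply: contraTneq rL => ->; rewrite ltnn.
  move=> /matrix0Pn [i [j Kij]].
  pose c := row i (kermx L).
  have cN0 : c != 0 by apply/rV0Pn; exists j; rewrite mxE.
  have cL : c *m L = 0 by apply/sub_kermxP; exact: row_sub.
  move: cL; rewrite mul_mx_row => /eqP; rewrite row_mx_eq0 => /andP [/eqP cv /eqP cG].
  pose x := c *m XC.
  pose w := x *m Pt.
  have w0 : forall i, i \in IS -> w 0 i = 0.
    move=> i0 Ii.
    pose t := fintype.enum_rank_in Ii i0.
    have /matrixP /(_ 0 t) h := cG.
    rewrite !mulmxA -/x -/w in h.
    have Gt : forall j, G j t = (j == i0)%:R.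
      by move=> j0; rewrite mxE fintype.enum_rankK_in.
    have E2 : (w *m G) 0 t = w 0 i0.
      rewrite [(w *m G) 0 t]mxE (bigD1 i0) //= big1 ?addr0; first by rewrite Gt eqxx mulr1.
      by move=> j0 j0i; rewrite Gt (negbTE j0i) mulr0.
    by rewrite -E2 h mxE.
  have qle : (x *m MC *m x^t*) 0 0 <= 0.
    have wt : w^t* = P *m x^t* by rewrite /w trmx_mul map_mxM trmxCK.
    have -> : x *m MC *m x^t* = w *m diag_mx D *m w^t*.
      by rewrite MCE invmx_unitary // wt /w /Pt !mulmxA.
    clearbody w; rewrite mxE; apply: sumr_le0 => j0 _; rewrite mul_mx_diag !mxE.
    case: (boolP (j0 \in IS)) => Ij; first by rewrite w0 // !mul0r.
    have Dle : D 0 j0 <= 0.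
      by rewrite real_leNgt ?Dreal ?real0 //; rewrite inE in Ij.
    rewrite mulrAC; apply: mulr_ge0_le0 => //; exact: mul_conjC_ge0.
  have qgt : 0 < (x *m MC *m x^t*) 0 0.
    pose BR := X *m (A + diag_mx d) *m X^T.
    have XMX : X *m M *m X^T = BR - sigma *: ((X *m v) *m (X *m v)^T).
      rewrite /M /BR mulmxBr mulmxBl -scalemxAr -scalemxAl trmx_mul !mulmxA.
      done.
    have XCt : XC^t* = map_mx f X^T.
      by apply/matrixP => a b; rewrite !mxE conj_real_complex.
    have E3 : XC *m MC *m map_mx f X^T =
        map_mx f BR - f sigma *: map_mx f ((X *m v) *m (X *m v)^T).
      by rewrite -map_mxZ -map_mxB -XMX !map_mxM.
    have cQ : c *m map_mx f ((X *m v) *m (X *m v)^T) = 0.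
      by rewrite !map_mxM -/XC -/vC mulmxA cv mul0mx.
    have -> : x *m MC *m x^t* = c *m (map_mx f BR) *m c^t*.
      have -> : x *m MC *m x^t* = c *m (XC *m MC *m map_mx f X^T) *m c^t*.
        by rewrite /x trmx_mul map_mxM XCt !mulmxA.
      by rewrite E3 mulmxBr -scalemxAr cQ scaler0 subr0.
    have BRsym : BR^T = BR.
      by rewrite /BR !trmx_mul trmxK linearD /= tr_diag_mx Asym mulmxA.
    have BRij : forall i j, i != j -> BR i j = bilf (chi (S i)) A (chi (S j)).
      by move=> i1 j1 ij; rewrite /BR XNX bilfD bilf_diag ?addr0 ?dis.
    apply: posdef => //.
    - by rewrite map_trmx BRsym.
    - by move=> i1 j1 ij; rewrite mxE BRij // ler0c; apply: bilf_ge0.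
    move=> i1; rewrite mxE; under eq_bigr => j1 _ do rewrite mxE.
    rewrite -rmorph_sum ltcR /BR XNX bilfD.
    rewrite (eq_bigr (fun j1 => bilf (chi (S i1)) A (chi (S j1)))); first exact: dom.
    by move=> j1 j1i; rewrite -/BR BRij // eq_sym.
  by have := lt_le_trans qgt qle; rewrite ltxx.
pose s0 := [seq complex.Re (D 0 i) | i <- enum IS].
exists (take k.-1 s0); split.
- by rewrite size_takel // size_map -cardE.
- apply/allP => x xs; have := mem_take xs; case/mapP => i.
  rewrite mem_enum inE => Di ->.
  by move: Di; rewrite ltcE => /andP [].
apply: (@dvdp_trans _ (\prod_(x <- s0) ('X - x%:P))).
  rewrite -[in X in _ %| X](cat_take_drop k.-1 s0) big_cat /=.
  exact: dvdp_mulIl.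
rewrite -(dvdp_map f) map_char_poly -/MC charC map_prod_XsubC big_map big_enum /=.
have -> : \prod_(i in IS) ('X - (f (complex.Re (D 0 i)))%:P) = \prod_(i in IS) ('X - (D 0 i)%:P).
  by apply: eq_bigr => i _; rewrite /f RRe_real.
by rewrite [X in _ %| X](bigID (mem IS)) /=; exact: dvdp_mulIl.
Qed.
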